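(* Let $G$ be a very well-covered graph with $V(G)=\{x_1,\ldots,x_h,y_1,\ldots,y_h\}$ such that $\{x_1,\ldots,x_h\}$ is a minimal vertex cover, $\{y_1,\ldots,y_h\}$ a maximal independent set and $\{x_i,y_i\}\in E(G)$ for all $i$. Let $s\ge1$, $e_1,\ldots,e_s\in E(G)$, and let $G'$ be the graph associated to $(I(G)^{s+1}:e_1\cdots e_s)$ as in the context. Suppose $(u=p_0)p_1\cdots p_{2k}(p_{2k+1}=v)$, $k\ge1$, is an even-connection in $G$ with respect to $e_1\cdots e_s$. If $\{w,p_i\}\in E(G')$ for some $0\le i\le 2k+1$, then $\{u,w\}\in E(G')$ or $\{v,w\}\in E(G')$.
   Context: $I(G)$ is the edge ideal; edges are identified with the products of their endpoints. $G$ is very well-covered if it has no isolated vertices, all minimal vertex covers have the same size, and this size is $|V(G)|/2$. Even-connection: a sequence $p_0p_1\cdots p_{2k+1}$, $k\ge1$, of vertices with $\{p_r,p_{r+1}\}\in E(G)$ for all $r$, each $\{p_{2\ell+1},p_{2\ell+2}\}$ ($0\le\ell\le k-1$) equal to some $e_m$, and each edge used among these at most as many times as it appears in $e_1,\dots,e_s$; then $p_0,p_{2k+1}$ (possibly equal) are even-connected. $(I(G)^{s+1}:e_1\cdots e_s)$ is minimally generated by $uv$ with $\{u,v\}\in E(G)$ or $u,v$ even-connected; $G'$ is the graph whose edge ideal is the polarization of this ideal (each generator $u^2$ replaced by $uu^*$ with a new vertex $u^*$), so for $u\ne v\in V(G)$, $\{u,v\}\in E(G')$ iff $\{u,v\}\in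 E(G)$ or $u,v$ are even-connected. *)

(* Defs.v *)
From mathcomp Require Import all_boot.
Set Implicit Arguments. Unset Strict Implicit. Unset Printing Implicit Defensive.

Section Graphs.
Variable T : finType.
Variable G : rel T.

Definition simple_graph := symmetric G /\ irreflexive G.

Definition vertex_cover (C : {set T}) :=
  forall a b, G a b -> (a \in C) || (b \in C).

Definition minimal_vertex_cover (C : {set T}) :=
  vertex_cover C /\ forall D : {set T}, D \proper C -> ~ vertex_cover D.

Definition independent (S : {set T}) :=
  forall a b, a \in S -> b \in S -> ~~ G a b.

Definition maximal_independent (S : {set T}) :=
  independent S /\ forall S' : {set T}, S \proper S' -> ~ independent S'.

Definition very_well_covered :=
  (forall a, exists b, G a b) /\
  forall C : {set T}, minimal_vertex_cover C -> (#|C| * 2 = #|T|)%N.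

Definition ueq (f g : T * T) : bool :=
  ((f.1 == g.1) && (f.2 == g.2)) || ((f.1 == g.2) && (f.2 == g.1)).

Definition used_edges (x0 : T) (p : seq T) (k : nat) : seq (T * T) :=
  [seq (nth x0 p (2 * l).+1, nth x0 p (2 * l).+2) | l <- iota 0 k].

(* p = [:: p_0; p_1; ...; p_(2k+1)] (k >= 1) is an even-connection with
   respect to e_1 ... e_s, where es = [:: e_1; ...; e_s] lists the edges e_m
   as pairs of endpoints (with repetitions).  x0 is only a default value for
   nth; all indices used are < size p, so it is irrelevant. *)
Definition even_connection_seq (x0 : T) (es : seq (T * T)) (p : seq T) (k : nat) :=
  [/\ (1 <= k)%N,
      size p = (2 * k).+2,
      (forall r, (r < (2 * k).+1)%N -> G (nth x0 p r) (nth x0 p r.+1)) &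
      (* each {p_(2l+1), p_(2l+2)} is some e_m, each edge used at most as
         many times as it appears among e_1, ..., e_s *)
      forall f : T * T,
        (count (ueq f) (used_edges x0 p k) <= count (ueq f) es)%N].

Definition even_connected (es : seq (T * T)) (u v : T) :=
  exists (p : seq T) (k : nat),
    [/\ even_connection_seq u es p k, nth u p 0 = u & nth u p (2 * k).+1 = v].

(* Edges of G' (polarization of (I(G)^(s+1) : e_1...e_s)) between vertices of
   G: for a != b, {a,b} in E(G') iff {a,b} in E(G) or a, b even-connected.
   For a = b we let G'_edge a a mean that the generator a^2 is present, i.e.
   {a, a*} is an edge of G' (iff a is even-connected to itself). *)
Definition G'_edge (es : seq (T * T)) (a b : T) : Prop :=
  if a == b then even_connected es a a else G a b \/ even_connected es a b.
End Graphs.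

(* Main.v *)
Require Import Defs.
From mathcomp Require Import all_boot zify.
Set Implicit Arguments. Unset Strict Implicit. Unset Printing Implicit Defensive.

Section Aux.
Variable T : finType.
Variable G : rel T.
Hypothesis Gsym : symmetric G.
Variable es : seq (T * T).

Fixpoint okp (a : T) (ps : seq (T * T)) (c : T) : bool :=
  if ps is e :: ps' then [&& G a e.1, G e.1 e.2 & okp e.2 ps' c] else G a c.

Definition cnt_ok (A : seq (T * T)) :=
  forall f, (count (ueq f) A <= count (ueq f) es)%N.

Definition EC a c := exists ps, [/\ ps != [::], okp a ps c & cnt_ok ps].

Lemma okp_cat a ps1 e ps2 c :
  okp a (ps1 ++ e :: ps2) c = [&& okp a ps1 e.1, G e.1 e.2 & okp e.2 ps2 c].
Proof.
elim: ps1 a => [|e' ps1 IH] a /=; first by [].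
by rewrite IH !andbA.
Qed.

Definition swp (e : T * T) := (e.2, e.1).
Definition revp (ps : seq (T * T)) := rev (map swp ps).

Lemma okp_rev a ps c : okp a ps c -> okp c (revp ps) a.
Proof.
elim: ps a => [|e ps IH] a /=; first by rewrite Gsym.
case/and3P => h1 h2 h3.
rewrite /revp map_cons rev_cons -cats1 okp_cat /=.
rewrite -/(revp ps) IH //= Gsym h2 /=.
by rewrite Gsym.
Qed.

Lemma ueqP (f g : T * T) : reflect (g = f \/ g = swp f) (ueq f g).
Proof.
case: f g => [a b] [c d]; rewrite /ueq /swp /=.
apply: (iffP idP).
- by case/orP => /andP [/eqP -> /eqP ->]; [left | right].
- by case => [[-> ->] | [-> ->]]; rewrite !eqxx ?orbT.
Qed.

Lemma ueq_swp (f g : T * T) : ueq f (swp g) = ueq f g.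
Proof. by case: f g => [a b] [c d]; rewrite /ueq /swp /= orbC. Qed.

Lemma ueq_sym (f g : T * T) : ueq f g = ueq g f.
Proof.
apply/ueqP/ueqP; case: f g => [a b] [c d] /= [[-> ->]|[-> ->]]; rewrite /swp /=; by [left|right].
Qed.

Lemma ueq_trans (f g h : T * T) : ueq f g -> ueq g h -> ueq f h.
Proof.
move=> /ueqP [->|->] /ueqP [->|->]; apply/ueqP; case: f => a b; rewrite /swp /=; by [left|right].
Qed.

Lemma count_revp f ps : count (ueq f) (revp ps) = count (ueq f) ps.
Proof.
rewrite /revp count_rev count_map; apply: eq_count => e /=.
by rewrite /preim /= ueq_swp.
Qed.

Lemma cnt_cat A B :
  (forall e1 e2, e1 \in A -> e2 \in B -> ~~ ueq e1 e2) ->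
  cnt_ok A -> cnt_ok B -> cnt_ok (A ++ B).
Proof.
move=> Hd hA hB f; rewrite count_cat.
case: (boolP (has (ueq f) A)) => HA.
- case: (boolP (has (ueq f) B)) => HB.
  + case/hasP: HA => e1 i1 h1; case/hasP: HB => e2 i2 h2.
    have := Hd _ _ i1 i2; rewrite (ueq_trans (g := f)) // ueq_sym //.
  + move: HB; rewrite has_count -leqNgt leqn0 => /eqP ->; rewrite addn0; exact: hA.
- move: HA; rewrite has_count -leqNgt leqn0 => /eqP ->; exact: hB.
Qed.

End Aux.

Section Aux2.
Variable T : finType.
Variable G : rel T.
Hypothesis Gsym : symmetric G.
Variable es : seq (T * T).

Lemma used_shift (x0 a b : T) p' k :
  used_edges x0 [:: a, b & p'] k.+1 = (b, nth x0 p' 0) :: used_edges x0 p' k.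
Proof.
rewrite /used_edges /=.
have -> : iota 1 k = map (addn 1) (iota 0 k) by rewrite -iotaDl.
rewrite -map_comp; congr (_ :: _).
apply: eq_map => l. have e1 : (2 * (1 + l)) = (2*l).+2 by lia. by rewrite /comp e1.
Qed.

Lemma ok_used k x0 p : size p = (2 * k).+2 ->
  (forall r, (r < (2 * k).+1)%N -> G (nth x0 p r) (nth x0 p r.+1)) ->
  okp G (nth x0 p 0) (used_edges x0 p k) (nth x0 p (2 * k).+1).
Proof.
elim: k p => [|k IH] p.
  by case: p => [|a [|b [|c p]]] //= _ H; have := H 0%N isT.
case: p => [|a [|b p']] // Hs H.
rewrite used_shift.
have -> : (2 * k.+1).+1 = ((2 * k).+1).+2 by lia.
have H0 := H 0%N isT; have H1 := H 1%N.
rewrite /= in H0 H1 *.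
rewrite H0 H1 /=; last by lia.
have := IH p'; apply.
- by move: Hs => /= [->]; lia.
- move=> r Hr; have := H r.+2; apply; lia.
Qed.

Fixpoint mkp (a : T) (ps : seq (T * T)) (c : T) : seq T :=
  if ps is e :: ps' then a :: e.1 :: mkp e.2 ps' c else [:: a; c].

Lemma mkp_size a ps c : size (mkp a ps c) = (2 * size ps).+2.
Proof. elim: ps a => [|e ps IH] a //=; rewrite IH; lia. Qed.

Lemma mkp_last x0 a ps c : nth x0 (mkp a ps c) (2 * size ps).+1 = c.
Proof.
elim: ps a => [|e ps IH] a //.
have -> : (2 * size (e :: ps)).+1 = ((2 * size ps).+1).+2 by rewrite /=; lia.
by rewrite /= IH.
Qed.

Lemma mkp_used x0 a ps c : used_edges x0 (mkp a ps c) (size ps) = ps.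
Proof.
elim: ps a => [|[e1 e2] ps IH] a //=.
rewrite used_shift IH; case: ps {IH} => //.
Qed.

Lemma mkp_edges x0 a ps c : okp G a ps c ->
  forall r, (r < (2 * size ps).+1)%N -> G (nth x0 (mkp a ps c) r) (nth x0 (mkp a ps c) r.+1).
Proof.
elim: ps a => [|[e1 e2] ps IH] a /=.
  by move=> H [|r] //.
case/and3P => h1 h2 h3 [|[|r]] Hr //=.
- by case: ps {IH h3 Hr} => [|? ?].
- apply: IH => //; lia.
Qed.

Lemma ec_EC a c : even_connected G es a c <-> EC G es a c.
Proof.
split.
- case=> p [k [[Hk Hs He Hc] H0 H1]].
  exists (used_edges a p k); split => //.
  + by rewrite -size_eq0 size_map size_iota; lia.
  + by have := ok_used Hs He; rewrite H0 H1.
- case=> ps [Hne Hok Hc].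
  exists (mkp a ps c), (size ps); split.
  + split.
    * by case: ps Hne {Hok Hc}.
    * exact: mkp_size.
    * exact: mkp_edges.
    * by rewrite mkp_used.
  + by case: ps {Hne Hok Hc}.
  + exact: mkp_last.
Qed.

Lemma EC_sym a c : EC G es a c -> EC G es c a.
Proof.
case=> ps [Hne Hok Hc]; exists (revp ps); split.
- by rewrite /revp -size_eq0 size_rev size_map size_eq0.
- exact: okp_rev.
- by move=> f; rewrite count_revp.
Qed.

End Aux2.

Section Aux3.
Variable T : finType.
Variable G : rel T.
Hypothesis Gsym : symmetric G.
Variable es : seq (T * T).

Lemma join_fwd u v a A ps1 x y ps2 :
  okp G a A x -> okp G u (ps1 ++ (x, y) :: ps2) v ->
  cnt_ok es A -> cnt_ok es (ps1 ++ (x, y) :: ps2) ->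
  (forall e, e \in A -> ~~ has (ueq e) (ps1 ++ (x, y) :: ps2)) ->
  EC G es a v.
Proof.
move=> hA hp cA cp hd; exists (A ++ (x, y) :: ps2); split.
- by case: A {hA cA hd}.
- move: hp; rewrite !okp_cat /= => /and3P [_ -> ->]; by rewrite hA.
- apply: cnt_cat => //.
  + move=> e1 e2 i1 i2; apply/negP => h; have := hd _ i1; rewrite has_cat.
    by case/norP => _ /hasP; apply; exists e2.
  + by move=> f; apply: leq_trans (cp f); rewrite count_cat leq_addl.
Qed.

Lemma join_bwd u v a A ps1 x y ps2 :
  okp G a A y -> okp G u (ps1 ++ (x, y) :: ps2) v ->
  cnt_ok es A -> cnt_ok es (ps1 ++ (x, y) :: ps2) ->
  (forall e, e \in A -> ~~ has (ueq e) (ps1 ++ (x, y) :: ps2)) ->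
  EC G es a u.
Proof.
move=> hA hp cA cp hd; exists (A ++ (y, x) :: revp ps1); split.
- by case: A {hA cA hd}.
- move: hp; rewrite !okp_cat /= => /and3P [h1 h2 _].
  by rewrite hA Gsym h2 /=; apply: okp_rev.
- apply: cnt_cat => //.
  + move=> e1 e2 i1 i2; apply/negP => h; have := hd _ i1.
    case/negP; apply/hasP.
    move: i2 h; rewrite inE => /orP [/eqP ->| ].
    * exists (x, y); first by rewrite mem_cat inE eqxx orbT.
      by move: h; rewrite -(ueq_swp e1 (x, y)).
    * rewrite /revp mem_rev => /mapP [r ir ->] hh.
      exists r; first by rewrite mem_cat ir.
      by move: hh; rewrite ueq_swp.
  + move=> f; apply: leq_trans (cp f).
    rewrite /= count_revp count_cat /= -/(swp (x, y)) ueq_swp.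
    lia.
Qed.

End Aux3.

Section Aux4.
Variable T : finType.
Variable G : rel T.
Hypothesis Gsym : symmetric G.
Variable es : seq (T * T).

Lemma gE_G a b : a != b -> G a b -> G'_edge G es a b.
Proof. by move=> h hab; rewrite /G'_edge (negbTE h); left. Qed.

Lemma gE_EC a b : EC G es a b -> G'_edge G es a b.
Proof.
move=> h; rewrite /G'_edge; case: eqP => [e|_]; [subst b | right]; exact/ec_EC.
Qed.

Lemma cnt_nil : cnt_ok es [::].
Proof. by move=> f. Qed.

Lemma cnt_prefix A B : cnt_ok es (A ++ B) -> cnt_ok es A.
Proof. by move=> h f; apply: leq_trans (h f); rewrite count_cat leq_addr. Qed.

Lemma core u v w z ps :
  okp G u ps v -> cnt_ok es ps ->
  (z = u \/ z = v \/ exists ps1 x y ps2, ps = ps1 ++ (x, y) :: ps2 /\ (z = x \/ z = y)) ->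
  w != z -> (G w z \/ EC G es w z) ->
  G'_edge G es u w \/ G'_edge G es v w.
Proof.
move=> Hok Hcp Hpath Hwz [Gwz | [qs [Hne Hq Hcq]]].
- case: Hpath => [Ez | [Ez | [ps1 [x [y [ps2 [Eps Ex]]]]]]].
  + by left; apply: gE_G; [rewrite eq_sym -Ez | rewrite Gsym -Ez].
  + by right; apply: gE_G; [rewrite eq_sym -Ez | rewrite Gsym -Ez].
  + subst ps; case: Ex => Ex; subst z.
    * right; apply/gE_EC/(EC_sym Gsym).
      apply: (join_fwd (A := [::]) _ Hok) => //; exact: cnt_nil.
    * left; apply/gE_EC/(EC_sym Gsym).
      apply: (join_bwd Gsym (A := [::]) _ Hok) => //; exact: cnt_nil.
- case: (boolP (has (fun e => has (ueq e) ps) qs)) => HP.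
  + move: Hq Hcq; case: (split_find_nth (w, w) HP) => e qs1 qs2 Pe Hn1.
    rewrite cat_rcons okp_cat => /and3P [Hq1 _ _] Hcq.
    have Hc1 := cnt_prefix Hcq.
    have Hd : forall e', e' \in qs1 -> ~~ has (ueq e') ps by apply/hasPn.
    case/hasP: Pe => r ir Her.
    have [ps1 [ps2 Eps]] : exists ps1 ps2, ps = ps1 ++ r :: ps2
      by case/splitPr: ir => ps1 ps2; exists ps1, ps2.
    subst ps; case: r Her Hd Hok Hcp {ir Hpath HP Hn1} => x y /ueqP [Ee|Ee] Hd Hok Hcp.
    * right; apply/gE_EC/(EC_sym Gsym).
      apply: (join_fwd (A := qs1) _ Hok) => //; by move: Hq1; rewrite -Ee.
    * left; apply/gE_EC/(EC_sym Gsym).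
      apply: (join_bwd Gsym (A := qs1) _ Hok) => //.
      by case: e Ee Hq1 {Hcq} => ? ? [_ ->].
  + move/hasPn: HP => Hd.
    case: Hpath => [Ez | [Ez | [ps1 [x [y [ps2 [Eps Ex]]]]]]].
    * left; apply/gE_EC/(EC_sym Gsym); subst z; by exists qs.
    * right; apply/gE_EC/(EC_sym Gsym); subst z; by exists qs.
    * subst ps; case: Ex => Ex; subst z.
      -- right; apply/gE_EC/(EC_sym Gsym).
         exact: (join_fwd (A := qs) _ Hok).
      -- left; apply/gE_EC/(EC_sym Gsym).
         exact: (join_bwd Gsym (A := qs) _ Hok).
Qed.

End Aux4.

Lemma on_path (T : finType) (u v : T) p k i :
  nth u p 0 = u -> nth u p (2 * k).+1 = v -> (i <= (2 * k).+1)%N ->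
  nth u p i = u \/ nth u p i = v \/
  exists ps1 x y ps2, used_edges u p k = ps1 ++ (x, y) :: ps2 /\
     (nth u p i = x \/ nth u p i = y).
Proof.
move=> Hu Hv Hi.
case: (posnP i) => [->|Hi0]; first by left.
case: (ltnP i (2 * k).+1) => Hik; last first.
  by right; left; have -> : i = (2 * k).+1 by lia.
right; right.
have Hodd := odd_double_half i.-1.
rewrite -muln2 in Hodd.
set l := i.-1./2 in Hodd.
have Hl : (l < k)%N by case: (odd i.-1) Hodd => /= Hodd; lia.
have Hsz : (l < size (used_edges u p k))%N by rewrite size_map size_iota.
have Hn : nth (u, u) (used_edges u p k) l = (nth u p (2 * l).+1, nth u p (2 * l).+2).
  by rewrite (nth_map 0%N) ?size_iota // nth_iota.
exists (take l (used_edges u p k)), (nth u p (2 * l).+1), (nth u p (2 * l).+2),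
  (drop l.+1 (used_edges u p k)); split.
  by rewrite -Hn -(drop_nth (u, u) Hsz) cat_take_drop.
case: (odd i.-1) Hodd => /= Hodd.
- by right; congr nth; lia.
- by left; congr nth; lia.
Qed.

Theorem lemma4p3 (T : finType) (G : rel T) (h : nat)
  (x y : 'I_h -> T)
  (HG : simple_graph G)
  (Hvwc : very_well_covered G)
  (Hxinj : injective x) (Hyinj : injective y)
  (Hxy : forall i j, x i != y j)
  (HV : forall t : T, exists i, t = x i \/ t = y i)
  (Hcover : minimal_vertex_cover G [set x i | i in 'I_h])
  (Hindep : maximal_independent G [set y i | i in 'I_h])
  (Hxyedge : forall i, G (x i) (y i))
  (s : nat) (Hs : (1 <= s)%N)
  (es : seq (T * T)) (Hsize : size es = s)
  (Hes : forall e, e \in es -> G e.1 e.2)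
  (p : seq T) (k : nat) (u v : T)
  (Hp : even_connection_seq G u es p k)
  (Hu : nth u p 0 = u) (Hv : nth u p (2 * k).+1 = v)
  (w : T) (i : nat) (Hi : (i <= (2 * k).+1)%N)
  (Hwi : w != nth u p i)
  (Hedge : G'_edge G es w (nth u p i)) :
  G'_edge G es u w \/ G'_edge G es v w.
Proof.
case: HG => Gsym _.
case: Hp => Hk Hsz He Hc.
have Hok : okp G u (used_edges u p k) v by have := ok_used Hsz He; rewrite Hu Hv.
apply: (core Gsym Hok Hc (on_path Hu Hv Hi) Hwi).
move: Hedge; rewrite /G'_edge (negbTE Hwi) => -[H|H]; [by left | right; exact/ec_EC].
Qed.
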